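(* For every integer $n$ there is an isomorphism of $\mathcal{A}(\mathbb{CP}^1_q)$-bimodules $$\Phi_{(n)}:\ \mathcal{L}_n\otimes_{\mathcal{A}(\mathbb{CP}^1_q)}\Omega^{(0,1)}(\mathbb{CP}^1_q)\ \xrightarrow{\ \sim\ }\ \Omega^{(0,1)}(\mathbb{CP}^1_q)\otimes_{\mathcal{A}(\mathbb{CP}^1_q)}\mathcal{L}_n,$$ and likewise an isomorphism of $\mathcal{A}(\mathbb{CP}^1_q)$-bimodules $\mathcal{L}_n\otimes_{\mathcal{A}(\mathbb{CP}^1_q)}\Omega^{(1,0)}(\mathbb{CP}^1_q)\simeq\Omega^{(1,0)}(\mathbb{CP}^1_q)\otimes_{\mathcal{A}(\mathbb{CP}^1_q)}\mathcal{L}_n$.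
   Context: Fix $0<q<1$. Let $\mathcal{A}(SU_q(2))$ be the unital complex $*$-algebra generated by $a,c$ subject to $ac=qca$, $ac^*=qc^*a$, $cc^*=c^*c$, $a^*a+c^*c=aa^*+q^2cc^*=1$. Let $K$ be the algebra automorphism... more precisely, $U_q(su(2))$ (generated by $K^{\pm1},E,F$ with $KE=qEK$, $KF=q^{-1}FK$, $EF-FE=(K^2-K^{-2})/(q-q^{-1})$, $\Delta K=K\otimes K$) acts on $\mathcal{A}(SU_q(2))$ making it a left module algebra, with $K\triangleright a=q^{-1/2}a$, $K\triangleright c=q^{-1/2}c$, $K\triangleright a^*=q^{1/2}a^*$, $K\triangleright c^*=q^{1/2}c^*$ (so $K$ acts by an algebra automorphism). For $n\in\mathbb{Z}$ let $\mathcal{L}_n=\{x\in\mathcal{A}(SU_q(2)):K\triangleright x=q^{n/2}x\}$ and $\mathcal{A}(\mathbb{CP}^1_q):=\mathcal{L}_0$; each $\mathcal{L}_n$ is an $\mathcal{A}(\mathbb{CP}^1_q)$-bimodule. Let $\Omega^1(SU_q(2))$ be the $\mathcal{A}(SU_q(2))$-bimodule which is free as a left module with basis $\omega_+,\omega_-,\omega_z$, with right multiplication determined by $\omega_\pm x=q^kx\omega_\pm$ and $\omega_zx=q^{2k}x\omega_z$ for $x\in\mathcal{L}_k$. Define the $\mathcal{A}(\mathbb{CP}^1_q)$-sub-bimodules $\Omega^{(0,1)}(\mathbb{CP}^1_q):=\mathcal{L}_{-2}\,\omega_-$ and $\Omega^{(1,0)}(\mathbb{CP}^1_q):=\mathcal{L}_{2}\,\omega_+$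 of $\Omega^1(SU_q(2))$. *)

(* Defs.v *)
From HB Require Import structures.
From mathcomp Require Import all_boot all_order all_algebra.
From mathcomp Require Import reals complex.
Set Implicit Arguments. Unset Strict Implicit. Unset Printing Implicit Defensive.
Import Order.TTheory GRing.Theory Num.Theory.
Local Open Scope ring_scope.

Definition alg_hom (K : comNzRingType) (A B : lalgType K) (f : A -> B) : Prop :=
  [/\ (forall x y, f (x + y) = f x + f y),
      (forall (k : K) x, f (k *: x) = k *: f x),
      (forall x y, f (x * y) = f x * f y) & f 1 = 1].

(* Generators a, c and their adjoints as, cs (standing for a^*, c^* ).
   The defining relations of the star-algebra, together with their adjoints
   (q is real, so conj q = q):
     ac = q ca,  ac^* = q c^*a,  cc^* = c^*c,  a^*a + c^*c = 1,  aa^* + q^2 cc^* = 1,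
     c^*a^* = q a^*c^*   (adjoint of ac = q ca),
     ca^*  = q a^*c    (adjoint of ac^* = q c^*a).                                *)
Definition SUq2_rels (K : comNzRingType) (q : K) (A : lalgType K)
    (a as_ c cs : A) : Prop :=
  [/\ a * c = q *: (c * a),
      a * cs = q *: (cs * a),
      c * cs = cs * c,
      as_ * a + cs * c = 1 &
      [/\ a * as_ + q ^+ 2 *: (c * cs) = 1,
          cs * as_ = q *: (as_ * cs) &
          c * as_ = q *: (as_ * c)]].

Definition SUq2_universal (K : comNzRingType) (q : K) (A : algType K)
    (a as_ c cs : A) : Prop :=
  forall (B : algType K) (a' as' c' cs' : B),
    SUq2_rels q a' as' c' cs' ->
    exists! f : A -> B,
      [/\ alg_hom f, f a = a', f as_ = as', f c = c' & f cs = cs'].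

(* The action of K in U_q(su(2)): an algebra automorphism with
   K>a = q^{-1/2} a, K>c = q^{-1/2} c, K>a* = q^{1/2} a*, K>c* = q^{1/2} c*.
   qh stands for q^{1/2}. *)
Definition K_action (K : comUnitRingType) (qh : K) (A : algType K)
    (a as_ c cs : A) (Kop : A -> A) : Prop :=
  [/\ alg_hom Kop, bijective Kop,
      Kop a = qh^-1 *: a /\ Kop c = qh^-1 *: c,
      Kop as_ = qh *: as_ & Kop cs = qh *: cs].

Definition Lsp (K : comUnitRingType) (qh : K) (A : algType K) (Kop : A -> A)
    (n : int) (x : A) : Prop :=
  Kop x = qh ^ n *: x.

(* Bimodules, given concretely: a subset (bm_mem) of an ambient additive
   group (bm_car), with a left action bm_l and a right action bm_r by
   elements of an ambient ring (only used for elements of the base ring). *)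
Record bimod (A : Type) := BiMod {
  bm_car : zmodType;
  bm_mem : bm_car -> Prop;
  bm_l : A -> bm_car -> bm_car;
  bm_r : bm_car -> A -> bm_car }.
Arguments bm_car {A} b.
Arguments bm_mem {A} b _.
Arguments bm_l {A} b _ _.
Arguments bm_r {A} b _ _.

Definition Lbim (K : comUnitRingType) (qh : K) (A : algType K) (Kop : A -> A)
    (n : int) : bimod A :=
  @BiMod A A (Lsp qh Kop n) (fun b x => b * x) (fun x b => x * b).

(* Omega^1(SU_q(2)): free left A-module with basis w+, w-, wz; an element
   x+ w+ + x- w- + xz wz is the triple ((x+, x-), xz).  Left multiplication
   is coordinatewise; right multiplication by a homogeneous x in L_k is
   given by  w± x = q^k x w±,  wz x = q^{2k} x wz. *)
Definition Om1_lmul (A : nzRingType) (b : A) (w : (A * A * A)%type)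
  : (A * A * A)%type :=
  ((b * w.1.1, b * w.1.2), b * w.2).

Definition Om1_rmul_hom (K : comUnitRingType) (q : K) (A : algType K) (k : int)
    (w : (A * A * A)%type) (x : A) : (A * A * A)%type :=
  ((w.1.1 * (q ^ k *: x), w.1.2 * (q ^ k *: x)), w.2 * (q ^ (2 * k) *: x)).

(* Omega^{(0,1)}(CP^1_q) = L_{-2} w-   and   Omega^{(1,0)}(CP^1_q) = L_2 w+,
   as A(CP^1_q)-sub-bimodules of Omega^1(SU_q(2)); A(CP^1_q) = L_0, so
   the right action is the one of homogeneous elements of degree 0. *)
Definition Om01 (K : comUnitRingType) (q qh : K) (A : algType K) (Kop : A -> A)
  : bimod A :=
  @BiMod A (A * A * A)%type
    (fun w => [/\ w.1.1 = 0, w.2 = 0 & Lsp qh Kop (-2) w.1.2])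
    (@Om1_lmul A) (fun w b => Om1_rmul_hom q 0 w b).

Definition Om10 (K : comUnitRingType) (q qh : K) (A : algType K) (Kop : A -> A)
  : bimod A :=
  @BiMod A (A * A * A)%type
    (fun w => [/\ w.1.2 = 0, w.2 = 0 & Lsp qh Kop 2 w.1.1])
    (@Om1_lmul A) (fun w b => Om1_rmul_hom q 0 w b).

Definition biadd_bal (A : Type) (Bs : A -> Prop) (M N : bimod A) (G : zmodType)
    (f : bm_car M -> bm_car N -> G) : Prop :=
  [/\ (forall x x' y, bm_mem M x -> bm_mem M x' -> bm_mem N y ->
          f (x + x') y = f x y + f x' y),
      (forall x y y', bm_mem M x -> bm_mem N y -> bm_mem N y' ->
          f x (y + y') = f x y + f x y') &
      (forall b x y, Bs b -> bm_mem M x -> bm_mem N y ->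
          f (bm_r M x b) y = f x (bm_l N b y))].

Definition is_tensor (A : Type) (Bs : A -> Prop) (M N : bimod A)
    (T : zmodType) (lT : A -> T -> T) (rT : T -> A -> T)
    (beta : bm_car M -> bm_car N -> T) : Prop :=
  [/\ biadd_bal Bs beta,
      (forall b x y, Bs b -> bm_mem M x -> bm_mem N y ->
          lT b (beta x y) = beta (bm_l M b x) y),
      (forall b x y, Bs b -> bm_mem M x -> bm_mem N y ->
          rT (beta x y) b = beta x (bm_r N y b)),
      (forall b t t', Bs b -> lT b (t + t') = lT b t + lT b t'
                             /\ rT (t + t') b = rT t b + rT t' b) &
      (forall (G : zmodType) (f : bm_car M -> bm_car N -> G),
          biadd_bal Bs f ->
          exists! g : T -> G,
            (forall t t', g (t + t') = g t + g t') /\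
            (forall x y, bm_mem M x -> bm_mem N y -> g (beta x y) = f x y))].

Definition bimod_iso (A : Type) (Bs : A -> Prop)
    (T1 : zmodType) (l1 : A -> T1 -> T1) (r1 : T1 -> A -> T1)
    (T2 : zmodType) (l2 : A -> T2 -> T2) (r2 : T2 -> A -> T2)
    (Phi : T1 -> T2) : Prop :=
  [/\ (forall t t', Phi (t + t') = Phi t + Phi t'),
      bijective Phi,
      (forall b t, Bs b -> Phi (l1 b t) = l2 b (Phi t)) &
      (forall b t, Bs b -> Phi (r1 t b) = r2 (Phi t) b)].

(* "M (x)_Bs N and N (x)_Bs M are isomorphic as Bs-bimodules": any tensor
   product of M and N is isomorphic to any tensor product of N and M. *)
Definition tensor_swap_iso (A : Type) (Bs : A -> Prop) (M N : bimod A) : Prop :=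
  forall (T1 : zmodType) (l1 : A -> T1 -> T1) (r1 : T1 -> A -> T1)
         (beta1 : bm_car M -> bm_car N -> T1)
         (T2 : zmodType) (l2 : A -> T2 -> T2) (r2 : T2 -> A -> T2)
         (beta2 : bm_car N -> bm_car M -> T2),
    is_tensor Bs l1 r1 beta1 -> is_tensor Bs l2 r2 beta2 ->
    exists Phi : T1 -> T2, bimod_iso Bs l1 r1 l2 r2 Phi.

(* Main.v *)
Require Import Defs.
From HB Require Import structures.
From mathcomp Require Import all_boot all_order all_algebra.
From mathcomp Require Import reals complex.
From mathcomp Require Import zify.
Set Implicit Arguments. Unset Strict Implicit. Unset Printing Implicit Defensive.
Import Order.TTheory GRing.Theory Num.Theory.
Local Open Scope ring_scope.

Lemma sum_mem (T G : zmodType) (P : T -> Prop) (f : T -> G) (I : eqType)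
  (s : seq I) (g : I -> T) :
  P 0 -> (forall y y', P y -> P y' -> P (y + y')) ->
  (forall y y', P y -> P y' -> f (y + y') = f y + f y') ->
  (forall i, i \in s -> P (g i)) ->
  P (\sum_(i <- s) g i) /\ f (\sum_(i <- s) g i) = \sum_(i <- s) f (g i).
Proof.
move=> P0 PD fD; elim: s => [|x s IH] Hg.
  rewrite !big_nil; split=> //.
  have h := fD 0 0 P0 P0; rewrite addr0 in h.
  have : f 0 + 0 = f 0 + f 0 by rewrite addr0.
  by move/addrI.
rewrite !big_cons.
have [Ps Fs] : P (\sum_(i <- s) g i) /\ f (\sum_(i <- s) g i) = \sum_(i <- s) f (g i).
  by apply: IH => i hi; apply: Hg; rewrite inE hi orbT.
have Px := Hg x (mem_head x s).
by split; [exact: PD | rewrite fD // Fs].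
Qed.

Lemma sumT (T G : zmodType) (f : T -> G) (I : eqType) (s : seq I) (g : I -> T) :
  (forall y y', f (y + y') = f y + f y') ->
  f (\sum_(i <- s) g i) = \sum_(i <- s) f (g i).
Proof.
move=> fD; have [] // := @sum_mem T G (fun _ => True) f I s g.
Qed.

Lemma uniq_ext (T G : Type) (P : (T -> G) -> Prop) g1 g2 :
  (exists! g, P g) -> P g1 -> P g2 -> forall t, g1 t = g2 t.
Proof. by move=> [g [_ U]] h1 h2 t; rewrite -(U _ h1) -(U _ h2). Qed.

Section Grade.
Variables (K : fieldType) (qh : K) (A : algType K) (Kop : A -> A).
Hypothesis Hqh : qh != 0.
Hypothesis HKop : alg_hom Kop.
Local Notation L := (Lsp qh Kop).

Lemma Kop0 : Kop 0 = 0.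
Proof.
case: HKop => hD _ _ _.
have : Kop 0 + 0 = Kop 0 + Kop 0 by rewrite -hD !addr0.
by move/addrI.
Qed.

Lemma L0 k : L k 0.
Proof. by rewrite /Lsp Kop0 scaler0. Qed.

Lemma LD k x y : L k x -> L k y -> L k (x + y).
Proof. by case: HKop => hD _ _ _; rewrite /Lsp hD => -> ->; rewrite scalerDr. Qed.

Lemma LM k l x y : L k x -> L l y -> L (k + l) (x * y).
Proof.
case: HKop => _ _ hM _; rewrite /Lsp hM => -> ->.
by rewrite -scalerAl -scalerAr scalerA expfzDr.
Qed.

Lemma Leq k l x : k = l -> L k x -> L l x.
Proof. by move=> ->. Qed.

Lemma LMe k l r x y : k + l = r -> L k x -> L l y -> L r (x * y).
Proof. by move=> <-; apply: LM. Qed.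

Lemma LMe' k l r x y : L k x -> L l y -> k + l = r -> L r (x * y).
Proof. by move=> hx hy <-; apply: LM. Qed.

Lemma Leq' k l x : L k x -> k = l -> L l x.
Proof. by move=> h <-. Qed.

Lemma L1 : L 0 1.
Proof. by case: HKop => _ _ _ h1; rewrite /Lsp h1 expr0z scale1r. Qed.

Definition strong (k : int) := exists s : seq (A * A),
  (forall p, p \in s -> L (- k) p.1 /\ L k p.2) /\ \sum_(p <- s) p.1 * p.2 = 1.

Lemma strong_add k l : strong k -> strong l -> strong (k + l).
Proof.
move=> [s [Hs Hs1]] [t [Ht Ht1]].
exists [seq (p.1 * r.1, r.2 * p.2) | p <- s, r <- t]; split.
  move=> z /allpairsP [[p r] [/= ps rt ->]] /=.
  have [h1 h2] := Hs p ps; have [h3 h4] := Ht r rt.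
  split; first by apply: (LMe _ h1 h3); lia.
  by apply: (LMe _ h4 h2); lia.
rewrite big_allpairs_dep /= -Hs1; apply: eq_bigr => p _.
have -> : p.1 * p.2 = p.1 * (\sum_(r <- t) r.1 * r.2) * p.2 by rewrite Ht1 mulr1.
rewrite mulr_sumr mulr_suml.
by apply: eq_bigr => r _; rewrite /= !mulrA.
Qed.

Lemma strong0 : strong 0.
Proof.
exists [:: (1, 1)]; split; last by rewrite big_cons big_nil mulr1 addr0.
by move=> p; rewrite inE => /eqP -> /=; split; apply: L1.
Qed.

Lemma strong_all : strong 1 -> strong (-1) -> forall k, strong k.
Proof.
move=> s1 sm1.
have hn : forall k : nat, strong k /\ strong (- k%:Z).
  elim=> [|k [IH1 IH2]]; first by split; [apply: strong0 | rewrite oppr0; apply: strong0].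
  rewrite intS opprD; split; [exact: strong_add | exact: strong_add].
case=> k; first by case: (hn k).
by rewrite NegzE; case: (hn k.+1).
Qed.

End Grade.

Ltac deg M E := match goal with
 | |- bm_mem (Lbim _ _ _) _ => simpl; deg M E
 | |- Lsp _ _ _ (_ * _) => eapply M; [deg M E | deg M E | first [reflexivity | lia]]
 | |- Lsp _ _ _ _ => first [eassumption | eapply E; [eassumption | lia]
      | match goal with h : bm_mem (Lbim _ _ _) ?y |- Lsp _ _ _ ?y =>
          eapply E; [exact h | first [reflexivity | lia]] end]
end.

Section Swap.
Variables (K : fieldType) (qh : K) (A : algType K) (Kop : A -> A).
Hypothesis Hqh : qh != 0.
Hypothesis HKop : alg_hom Kop.
Local Notation L := (Lsp qh Kop).
Variables (m n : int) (N : bimod A) (io : A -> bm_car N) (pr : bm_car N -> A).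
Hypotheses (Hmem : forall w, bm_mem N w <-> (w = io (pr w) /\ L m (pr w)))
 (Hpi : forall z, pr (io z) = z) (HioD : forall z z', io (z + z') = io z + io z')
 (Hl : forall b z, bm_l N b (io z) = io (b * z))
 (Hr : forall z b, bm_r N (io z) b = io (z * b)).
Hypotheses (hsn : strong qh Kop n) (hsm : strong qh Kop (- n)).

Local Notation M := (Lbim qh Kop n).

Lemma memio z : L m z -> bm_mem N (io z).
Proof. by move=> h; apply/Hmem; rewrite Hpi. Qed.

Lemma memE w : bm_mem N w -> w = io (pr w).
Proof. by case/Hmem. Qed.

Lemma memL w : bm_mem N w -> L m (pr w).
Proof. by case/Hmem. Qed.

Lemma prD w w' : bm_mem N w -> bm_mem N w' -> pr (w + w') = pr w + pr w'.
Proof.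
move=> /memE E /memE E'.
by rewrite {1}E {1}E' -HioD Hpi.
Qed.

Theorem swap_gen : tensor_swap_iso (L 0) M N.
Proof.
have LMe := LMe Hqh HKop; have LMe' := LMe' Hqh HKop; have Leq' := @Leq' K qh A Kop; have LD := @LD K qh A Kop HKop; have L0 := @L0 K qh A Kop HKop.
case: hsn => s [Hs Hs1]; case: hsm => t [Ht Ht1].
move=> T1 l1 r1 beta1 T2 l2 r2 beta2.
move=> [[b1D1 b1D2 b1B] b1l b1r b1lr b1U] [[b2D1 b2D2 b2B] b2l b2r b2lr b2U].
rewrite /= in b1D1 b1D2 b1B b1l b1r b2D1 b2D2 b2B b2l b2r.
pose H z := \sum_(p <- s) beta2 (io (z * p.1)) p.2.
pose H' z := \sum_(p <- t) beta1 p.1 (io (p.2 * z)).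
have HD z z' : L (m + n) z -> L (m + n) z' -> H (z + z') = H z + H z'.
  move=> hz hz'; rewrite /H -big_split /=; apply: eq_big_seq => p ps.
  have [h1 h2] := Hs p ps.
  rewrite mulrDl HioD b2D1 //; apply: memio.
    by apply: (LMe _ _ _ _ _ _ hz h1); lia.
  by apply: (LMe _ _ _ _ _ _ hz' h1); lia.
have H'D z z' : L (n + m) z -> L (n + m) z' -> H' (z + z') = H' z + H' z'.
  move=> hz hz'; rewrite /H' -big_split /=; apply: eq_big_seq => p ps.
  have [h1 h2] := Ht p ps.
  rewrite mulrDr HioD b1D2 //; first by apply: (Leq _ h1); lia.
    by apply: memio; apply: (LMe _ _ _ _ _ _ h2 hz); lia.
  by apply: memio; apply: (LMe _ _ _ _ _ _ h2 hz'); lia.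
have HK y x : L m y -> L n x -> beta2 (io y) x = H (y * x).
  move=> hy hx; rewrite /H.
  have e : forall p, p \in s -> beta2 (io (y * x * p.1)) p.2
                     = beta2 (io y) (x * p.1 * p.2).
    move=> p ps; have [h1 h2] := Hs p ps.
    rewrite -mulrA -Hr b2B //; last by apply: memio.
    by apply: (LMe _ _ _ _ _ _ hx h1); lia.
  rewrite (eq_big_seq _ e).
  have Hm : forall p, p \in s -> L n (x * p.1 * p.2).
    move=> p ps; have [h1 h2] := Hs p ps.
    apply: (LMe _ _ _ _ _ _ _ h2); last by apply: (LMe _ _ _ _ _ (erefl _) hx h1).
    lia.
  have [_ <-] := @sum_mem _ _ (L n) (beta2 (io y)) _ s (fun p => x * p.1 * p.2) (L0 n) (@LD n)
     (fun a b ha hb => b2D2 (io y) a b (memio hy) ha hb) Hm.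
  by congr (beta2 _ _); rewrite -{1}[x]mulr1 -Hs1 mulr_sumr; apply: eq_bigr => p _; rewrite mulrA.
have HK' x y : L n x -> L m y -> beta1 x (io y) = H' (x * y).
  move=> hx hy; rewrite /H'.
  have e : forall p, p \in t -> beta1 p.1 (io (p.2 * (x * y)))
                     = beta1 (p.1 * (p.2 * x)) (io y).
    move=> p pt; have [h1 h2] := Ht p pt.
    rewrite [p.2 * (x * y)]mulrA -Hl -b1B //.
    - by apply: (LMe _ _ _ _ _ _ h2 hx); lia.
    - by apply: (Leq _ h1); lia.
    - by apply: memio.
  rewrite (eq_big_seq _ e).
  have Hm : forall p, p \in t -> L n (p.1 * (p.2 * x)).
    move=> p pt; have [h1 h2] := Ht p pt.
    apply: (LMe _ _ _ _ _ _ h1); last by apply: (LMe _ _ _ _ _ (erefl _) h2 hx).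
    lia.
  have [_ <-] := @sum_mem _ _ (L n) (fun z => beta1 z (io y)) _ t (fun p => p.1 * (p.2 * x)) (L0 n) (@LD n)
     (fun a b ha hb => b1D1 a b (io y) ha hb (memio hy)) Hm.
  by congr (beta1 _ _); rewrite -{1}[x]mul1r -Ht1 mulr_suml; apply: eq_bigr => p _; rewrite mulrA.
have L1 := @L1 K qh A Kop HKop.
have Lf b x w b' : L 0 b -> L n x -> bm_mem N w -> L 0 b' -> L (m + n) (b * x * pr w * b').
  move=> hb hx hw hb'; have hp := memL hw.
  have := LMe _ _ _ _ _ (erefl _) (LMe _ _ _ _ _ (erefl _) (LMe _ _ _ _ _ (erefl _) hb hx) hp) hb'.
  by apply: Leq; lia.
have Lg b w x b' : L 0 b -> bm_mem N w -> L n x -> L 0 b' -> L (n + m) (b * pr w * x * b').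
  move=> hb hw hx hb'; have hp := memL hw.
  have := LMe _ _ _ _ _ (erefl _) (LMe _ _ _ _ _ (erefl _) (LMe _ _ _ _ _ (erefl _) hb hp) hx) hb'.
  by apply: Leq; lia.
have hF b b' : L 0 b -> L 0 b' ->
    biadd_bal (L 0) (M := M) (N := N) (fun x w => H (b * x * pr w * b')).
  move=> hb hb'; split => /=.
  - move=> x x' w hx hx' hw; rewrite mulrDr !mulrDl HD //; exact: Lf.
  - move=> x w w' hx hw hw'; rewrite prD // mulrDr mulrDl HD //; exact: Lf.
  - move=> c x w hc hx hw; rewrite {2}(memE hw) Hl Hpi; congr H; rewrite !mulrA //.
have hG b b' : L 0 b -> L 0 b' ->
    biadd_bal (L 0) (M := N) (N := M) (fun w x => H' (b * pr w * x * b')).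
  move=> hb hb'; split => /=.
  - move=> w w' x hw hw' hx; rewrite prD // mulrDr !mulrDl H'D //; exact: Lg.
  - move=> w x x' hw hx hx'; rewrite mulrDr mulrDl H'D //; exact: Lg.
  - move=> c w x hc hw hx; rewrite {1}(memE hw) Hr Hpi; congr H'; rewrite !mulrA //.
have UF := b1U _ _ (hF 1 1 L1 L1).
have UG := b2U _ _ (hG 1 1 L1 L1).
case: (UF) => Phi [[PhiD PhiB] _].
case: (UG) => Psi [[PsiD PsiB] _].
have b1bal : biadd_bal (L 0) beta1 by split.
have b2bal : biadd_bal (L 0) beta2 by split.
exists Phi; split => //.
- exists Psi.
  + move=> t0; apply: (uniq_ext (b1U _ _ b1bal) (g1 := fun t => Psi (Phi t)) (g2 := id)).
    * split; first by move=> u u'; rewrite PhiD PsiD.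
      move=> x w hx hw; rewrite PhiB // mul1r mulr1 /H (@sumT _ _ Psi _ _ _ PsiD).
      have hp := memL hw.
      have Hm : forall p, p \in s -> L (n + m) (x * pr w * p.1 * p.2).
        move=> p ps; have [h1 h2] := Hs p ps.
        have := LMe _ _ _ _ _ (erefl _) (LMe _ _ _ _ _ (erefl _) (LMe _ _ _ _ _ (erefl _) hx hp) h1) h2.
        by apply: Leq; lia.
      have e : forall p, p \in s -> Psi (beta2 (io (x * pr w * p.1)) p.2) = H' (x * pr w * p.1 * p.2).
        move=> p ps; have [h1 h2] := Hs p ps.
        rewrite PsiB //= ?Hpi ?mul1r ?mulr1 //; apply: memio.
        apply: (LMe _ _ _ _ _ _ _ h1); last by apply: (LMe _ _ _ _ _ (erefl _) hx hp).
        lia.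
      rewrite (eq_big_seq _ e).
      have [_ <-] := @sum_mem _ _ (L (n + m)) H' _ s (fun p => x * pr w * p.1 * p.2) (L0 _) (@LD _) H'D Hm.
      have -> : \sum_(p <- s) x * pr w * p.1 * p.2 = x * pr w.
        by rewrite -[RHS]mulr1 -Hs1 mulr_sumr; apply: eq_bigr => p _; rewrite !mulrA.
      by rewrite -HK' // -memE.
    * by split.
  + move=> t0; apply: (uniq_ext (b2U _ _ b2bal) (g1 := fun t => Phi (Psi t)) (g2 := id)).
    * split; first by move=> u u'; rewrite PsiD PhiD.
      move=> w x hw hx; rewrite PsiB // mul1r mulr1 /H' (@sumT _ _ Phi _ _ _ PhiD).
      have hp := memL hw.
      have Hm : forall p, p \in t -> L (m + n) (p.1 * (p.2 * (pr w * x))).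
        move=> p pt; have [h1 h2] := Ht p pt.
        have := LMe _ _ _ _ _ (erefl _) h1 (LMe _ _ _ _ _ (erefl _) h2 (LMe _ _ _ _ _ (erefl _) hp hx)).
        by apply: Leq; lia.
      have e : forall p, p \in t -> Phi (beta1 p.1 (io (p.2 * (pr w * x)))) = H (p.1 * (p.2 * (pr w * x))).
        move=> p pt; have [h1 h2] := Ht p pt.
        rewrite PhiB //= ?Hpi ?mul1r ?mulr1 ?mulrA //.
        + by apply: (Leq _ h1); lia.
        + by apply: memio; deg LMe' Leq'.
      rewrite (eq_big_seq _ e).
      have [_ <-] := @sum_mem _ _ (L (m + n)) H _ t (fun p => p.1 * (p.2 * (pr w * x))) (L0 _) (@LD _) HD Hm.
      have -> : \sum_(p <- t) p.1 * (p.2 * (pr w * x)) = pr w * x.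
        by rewrite -[RHS]mul1r -Ht1 mulr_suml; apply: eq_bigr => p _; rewrite !mulrA.
      by rewrite -HK // -memE.
    * by split.
- move=> b t0 hb.
  apply: (uniq_ext (b1U _ _ (hF b 1 hb L1)) (g1 := fun t => Phi (l1 b t)) (g2 := fun t => l2 b (Phi t))).
  + split; first by move=> u u'; rewrite (b1lr b u u' hb).1 PhiD.
    move=> x w hx hw; rewrite b1l // PhiB //; last by deg LMe' Leq'.
    by rewrite !mul1r.
  + split; first by move=> u u'; rewrite PhiD (b2lr b _ _ hb).1.
    move=> x w hx hw; rewrite PhiB // /H (@sumT _ _ (l2 b) _ _ _ (fun u u' => (b2lr b u u' hb).1)).
    apply: eq_big_seq => p ps; have [h1 h2] := Hs p ps.
    rewrite b2l //= ?Hl ?mul1r ?mulr1 ?mulrA //.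
    have hp := memL hw; apply: memio; deg LMe' Leq'.
- move=> b t0 hb.
  apply: (uniq_ext (b1U _ _ (hF 1 b L1 hb)) (g1 := fun t => Phi (r1 t b)) (g2 := fun t => r2 (Phi t) b)).
  + split; first by move=> u u'; rewrite (b1lr b u u' hb).2 PhiD.
    move=> x w hx hw; rewrite b1r // PhiB //.
      by rewrite {1}(memE hw) Hr Hpi mulr1 mulrA.
    rewrite {1}(memE hw) Hr; apply: memio.
    have hp := memL hw; deg LMe' Leq'.
  + split; first by move=> u u'; rewrite PhiD (b2lr b _ _ hb).2.
    move=> x w hx hw; rewrite PhiB // !mul1r mulr1 {1}/H (@sumT _ _ (r2 ^~ b) _ _ _ (fun u u' => (b2lr b u u' hb).2)).
    have hp := memL hw.
    have Hm : forall p, p \in s -> L (m + n) (x * pr w * p.1 * (p.2 * b)).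
      move=> p ps; have [h1 h2] := Hs p ps.
      have := LMe _ _ _ _ _ (erefl _) (LMe _ _ _ _ _ (erefl _) (LMe _ _ _ _ _ (erefl _) hx hp) h1) (LMe _ _ _ _ _ (erefl _) h2 hb).
      by apply: Leq; lia.
    have e : forall p, p \in s -> r2 (beta2 (io (x * pr w * p.1)) p.2) b = H (x * pr w * p.1 * (p.2 * b)).
      move=> p ps; have [h1 h2] := Hs p ps.
      have hy : L m (x * pr w * p.1) by deg LMe' Leq'.
      rewrite b2r //= ?HK //; first by deg LMe' Leq'.
      exact: memio.
    rewrite (eq_big_seq _ e).
    have [_ <-] := @sum_mem _ _ (L (m + n)) H _ s (fun p => x * pr w * p.1 * (p.2 * b)) (L0 _) (@LD _) HD Hm.
    congr H; rewrite -[in RHS](mulr1 (x * pr w)) -Hs1 mulr_sumr mulr_suml.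
    by apply: eq_bigr => p _; rewrite !mulrA.
Qed.
End Swap.

Lemma strong_one (K : fieldType) (qh q : K) (A : algType K) (Kop : A -> A)
   (a as_ c cs : A) :
  SUq2_rels q a as_ c cs -> K_action qh a as_ c cs Kop ->
  strong qh Kop 1 /\ strong qh Kop (-1).
Proof.
move=> [r1 r2 r3 r4 [r5 r6 r7]] [hK _ [ha hc] has hcs].
have La : Lsp qh Kop (-1) a by rewrite /Lsp exprN1.
have Lc : Lsp qh Kop (-1) c by rewrite /Lsp exprN1.
have Las : Lsp qh Kop 1 as_ by rewrite /Lsp expr1z.
have Lcs : Lsp qh Kop 1 cs by rewrite /Lsp expr1z.
have Lqc : Lsp qh Kop (-1) (q ^+ 2 *: c).
  by case: hK => _ hZ _ _; rewrite /Lsp hZ Lc scalerA mulrC -scalerA.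
split.
  exists [:: (a, as_); (q ^+ 2 *: c, cs)]; split.
    by move=> p; rewrite !inE => /orP [] /eqP -> /=.
  by rewrite !big_cons big_nil addr0 /= -scalerAl.
exists [:: (as_, a); (cs, c)]; split.
  by move=> p; rewrite !inE opprK => /orP [] /eqP -> /=.
by rewrite !big_cons big_nil addr0 /=.
Qed.

Theorem lemma3p6 (R : realType) (q : R) (hq0 : 0 < q) (hq1 : q < 1)
    (A : algType R[i]) (a as_ c cs : A)
    (Hrel : SUq2_rels (q%:C)%C a as_ c cs)
    (Huniv : SUq2_universal (q%:C)%C a as_ c cs)
    (Kop : A -> A) (HK : K_action ((Num.sqrt q)%:C)%C a as_ c cs Kop)
    (n : int) :
  tensor_swap_iso (Lsp ((Num.sqrt q)%:C)%C Kop 0)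
    (Lbim ((Num.sqrt q)%:C)%C Kop n) (Om01 (q%:C)%C ((Num.sqrt q)%:C)%C Kop)
  /\
  tensor_swap_iso (Lsp ((Num.sqrt q)%:C)%C Kop 0)
    (Lbim ((Num.sqrt q)%:C)%C Kop n) (Om10 (q%:C)%C ((Num.sqrt q)%:C)%C Kop).
Proof.
set qh := ((Num.sqrt q)%:C)%C.
have Hqh : qh != 0.
  rewrite /qh; apply/eqP => /(congr1 (@complex.Re R)) /= h.
  by move: (sqrtr_gt0 q); rewrite hq0 h ltxx.
have HKop : alg_hom Kop by case: HK.
have [s1 sm1] := strong_one Hrel HK.
have hsn := strong_all Hqh HKop s1 sm1 n.
have hsm := strong_all Hqh HKop s1 sm1 (- n).
split.
- apply: (@swap_gen _ qh A Kop Hqh HKop (-2) n (Om01 (q%:C)%C qh Kop) (fun z => ((0, z), 0)) (fun w => w.1.2)) => //.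
  + case=> [[x y] z] /=; split.
      by case=> -> -> h.
    by case=> [[-> ->]] h.
  + move=> z z' /=; congr (_, _); last by rewrite addr0.
    by rewrite [RHS]/(_ + _) /= /add_pair /= addr0.
  + by move=> b z /=; rewrite /Om1_lmul /= !mulr0.
  + by move=> z b /=; rewrite /Om1_rmul_hom /= !mul0r expr0z scale1r.
- apply: (@swap_gen _ qh A Kop Hqh HKop 2 n (Om10 (q%:C)%C qh Kop) (fun z => ((z, 0), 0)) (fun w => w.1.1)) => //.
  + case=> [[x y] z] /=; split.
      by case=> -> -> h.
    by case=> [[-> ->]] h.
  + move=> z z' /=; congr (_, _); last by rewrite addr0.
    by rewrite [RHS]/(_ + _) /= /add_pair /= addr0.
  + by move=> b z /=; rewrite /Om1_lmul /= !mulr0.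
  + by move=> z b /=; rewrite /Om1_rmul_hom /= !mul0r expr0z scale1r.
Qed.
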